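(* Let $S\subset\mathbb P^1$ be finite, let $(\alpha_1(p),\alpha_2(p),\alpha_3(p))_{p\in S}$ be real numbers with $\max_i\alpha_i(p)-\min_i\alpha_i(p)<1$ for each $p$ and $\sum_{i=1}^3\sum_{p\in S}\alpha_i(p)=0$, and let $(d_1,d_2,d_3)\in\mathbb Z^3$. For $i=1,2$ let $\ell_i=\#\{p\in S:\alpha_{i+1}(p)>\alpha_i(p)\}$. Then there exists a semistable strongly parabolic system of Hodge bundles $(\mathcal E,\theta)$ of type $(1,1,1)$ and parabolic degree $0$, with $\mathcal E=\mathcal L_1\oplus\mathcal L_2\oplus\mathcal L_3$, $\mathcal L_i$ of degree $d_i$ carrying weights $\alpha_i(p)$, and $\theta_1,\theta_2$ nonzero, if and only if $$\sum_{p\in S}(\alpha_2(p)+\alpha_3(p))\le d_1\le d_2-2+\ell_1\le d_3-4+\ell_1+\ell_2\le-\sum_{p\in S}\alpha_3(p)-4+\ell_1+\ell_2$$ and $d_1+d_2+d_3=0$.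
   Context: A strongly parabolic system of Hodge bundles of type $(1,1,1)$ over $\mathbb P^1$ with parabolic structure at $S$: line bundles $\mathcal L_1,\mathcal L_2,\mathcal L_3$ with weights $\alpha_i(p)$ at $p\in S$, $\mathcal E=\mathcal L_1\oplus\mathcal L_2\oplus\mathcal L_3$, and a Higgs field $\theta$ given by $\theta_1:\mathcal L_1\to\mathcal L_2\otimes\Omega^1(\log S)$, $\theta_2:\mathcal L_2\to\mathcal L_3\otimes\Omega^1(\log S)$, $\theta(\mathcal L_3)=0$, such that $\mathrm{res}_p\theta_i=0$ whenever $\alpha_{i+1}(p)\le\alpha_i(p)$ (the residue must send each weight part into the part of the next strictly larger weight). The parabolic degree of a sum $\mathcal F$ of some of the $\mathcal L_i$ is $\sum\big(d_i+\sum_{p}\alpha_i(p)\big)$ over the summands. $(\mathcal E,\theta)$ is semistable if every nonzero subbundle $\mathcal F=\bigoplus_{i\in A}\mathcal L_i$ ($A\subset\{1,2,3\}$) with $\theta(\mathcal F)\subset\mathcal F\otimes\Omega^1(\log S)$ satisfies $\mathrm{pardeg}\,\mathcal F/\mathrm{rank}\,\mathcal F\le\mathrm{pardeg}\,\mathcal E/3$. *)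

(* Defs.v *)
From HB Require Import structures.
From mathcomp Require Import all_boot all_order all_algebra.
From mathcomp Require Import reals.
From mathcomp Require Import complex.
Set Implicit Arguments. Unset Strict Implicit. Unset Printing Implicit Defensive.
Import Order.TTheory GRing.Theory Num.Theory.
Local Open Scope ring_scope.

Definition Cplx (R : realType) := complex R.

(* Points of P^1 over a field k: [Some z] is the point with affine
   coordinate z, [None] is the point at infinity. *)
Definition P1 (k : Type) := option k.

(* Global sections of O(n) on P^1 (n : int), in the standard affine chart:
   polynomials of degree <= n; only 0 when n < 0. *)
Definition is_section (k : fieldType) (n : int) (f : {poly k}) : bool :=
  if (n < 0)%R then f == 0 else (size f <= `|n|.+1)%N.

(* Value (in the fibre, up to the standard trivialisation) of a section of
   O(n) at a point of P^1; its vanishing is intrinsic. *)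
Definition sec_at (k : fieldType) (n : int) (f : {poly k}) (p : P1 k) : k :=
  match p with Some z => f.[z] | None => f`_(`|n|%N) end.

(* Indices 1,2,3 of the paper are the ordinals 0,1,2 of 'I_3. *)
Definition idx1 : 'I_3 := @Ordinal 3 0 isT.
Definition idx2 : 'I_3 := @Ordinal 3 1 isT.
Definition idx3 : 'I_3 := @Ordinal 3 2 isT.

Definition tri (T : Type) (x y z : T) (i : 'I_3) : T :=
  match val i with 0%N => x | 1%N => y | _ => z end.

Section Hodge.
Variables (R : realType).
Let C := Cplx R.
(* data: marked points S, degrees d i, weights al i p, Higgs components
   th1 : L1 -> L2 (x) Omega^1(log S), th2 : L2 -> L3 (x) Omega^1(log S),
   viewed as sections of L_i^* (x) L_(i+1) (x) Omega^1(log S)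
   = O(d_(i+1) - d_i - 2 + #S). *)
Variables (S : seq (P1 C)) (d : 'I_3 -> int) (al : 'I_3 -> P1 C -> R)
          (th1 th2 : {poly C}).

Definition higgs_deg (i j : 'I_3) : int := d j - d i - 2 + (size S)%:Z.

(* parabolic degree of the subbundle ⊕_{i in A} L_i *)
Definition pardeg (A : {set 'I_3}) : R :=
  \sum_(i in A) ((d i)%:~R + \sum_(p <- S) al i p).

(* theta(F) ⊂ F ⊗ Omega^1(log S) for F = ⊕_{i in A} L_i
   (theta(L3) = 0) *)
Definition theta_invariant (A : {set 'I_3}) : bool :=
  ((idx1 \in A) && (th1 != 0) ==> (idx2 \in A)) &&
  ((idx2 \in A) && (th2 != 0) ==> (idx3 \in A)).

Definition semistable : Prop :=
  forall A : {set 'I_3}, A != set0 -> theta_invariant A ->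
    pardeg A / (#|A|%:R) <= pardeg setT / 3%:R.

Definition strongly_parabolic_Hodge111 : Prop :=
  [/\ is_section (higgs_deg idx1 idx2) th1,
      is_section (higgs_deg idx2 idx3) th2,
      (forall p, p \in S -> al idx2 p <= al idx1 p ->
         sec_at (higgs_deg idx1 idx2) th1 p = 0) &
      (forall p, p \in S -> al idx3 p <= al idx2 p ->
         sec_at (higgs_deg idx2 idx3) th2 p = 0)].

End Hodge.

(* Main.v *)
Require Import Defs.
From HB Require Import structures.
From mathcomp Require Import all_boot all_order all_algebra.
From mathcomp Require Import reals complex zify lra.
Import Order.TTheory GRing.Theory Num.Theory.
Local Open Scope ring_scope.

Lemma sec_bound (k : fieldType) (n : int) (f : {poly k}) (F : seq (P1 k)) :
  uniq F -> f != 0 -> is_section n f ->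
  (forall p, p \in F -> sec_at n f p = 0) -> (size F)%:Z <= n.
Proof.
move=> uF f0; rewrite /is_section; case: n => [m|m] /=; last by rewrite (negPf f0).
move=> sf Hz.
set rs := pmap id F.
have urs : uniq rs by apply: (@pmap_uniq _ _ id Some) => //; case.
have ars : all (root f) rs.
  apply/allP => z; rewrite mem_pmap map_id => zF.
  by apply/rootP; exact: (Hz _ zF).
have := max_poly_roots f0 ars urs.
have Hsz : size F = (size rs + count_mem None F)%N.
  rewrite /rs size_pmap -(count_predC (fun x : P1 k => x) F); congr (_ + _)%N.
  by apply: eq_count => -[].
rewrite Hsz count_uniq_mem //.
case: (boolP (None \in F)) => hN /=.
  have fm : f`_m = 0 by exact: (Hz _ hN).
  have sf' : (size f <= m)%N.
    move: sf; rewrite leq_eqVlt => /orP[/eqP e|] //.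
    have : lead_coef f = 0 by rewrite lead_coefE e.
    by move/eqP; rewrite lead_coef_eq0 (negPf f0).
  move=> h; rewrite lez_nat addn1; exact: leq_trans h sf'.
move=> h; rewrite lez_nat addn0 -ltnS; exact: leq_trans h sf.
Qed.

Definition fac {k : fieldType} (p : P1 k) : {poly k} :=
  if p is Some z then 'X - z%:P else 1.

Lemma prod_fac (k : fieldType) (F : seq (P1 k)) :
  [/\ \prod_(p <- F) fac p != 0, size (\prod_(p <- F) fac p) = (count (fun x : P1 k => x) F).+1 &
      forall z, Some z \in F -> root (\prod_(p <- F) fac p) z].
Proof.
elim: F => [|p F [IH1 IH2 IH3]].
  by rewrite big_nil oner_eq0 size_poly1.
rewrite big_cons; split.
- by rewrite mulf_eq0 negb_or IH1 andbT; case: p => [z|] /=; rewrite ?polyXsubC_eq0 ?oner_eq0.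
- rewrite size_mul //; last by case: p => [z|] /=; rewrite ?polyXsubC_eq0 ?oner_eq0.
  by rewrite IH2; case: p => [z|] /=; rewrite ?size_XsubC ?size_poly1.
- move=> z; rewrite in_cons => /orP[/eqP <-|zF].
    by rewrite /= rootM root_XsubC eqxx.
  by rewrite rootM IH3 ?orbT.
Qed.

Lemma sec_exists (k : fieldType) (n : int) (F : seq (P1 k)) :
  (size F)%:Z <= n ->
  exists f, [/\ f != 0, is_section n f & forall p, p \in F -> sec_at n f p = 0].
Proof.
have [g0 gs gr] := @prod_fac _ F.
set g := \prod_(p <- F) fac p in g0 gs gr *.
have hc := count_predC (fun x : P1 k => x) F.
case: n => [m|m] /=; last by [].
rewrite lez_nat => hm.
exists g; split => //.
  rewrite /is_section /= gs; lia.
move=> [z|] pF /=; first by apply/eqP; exact: gr.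
apply: nth_default; rewrite gs.
have : (0 < count (predC (fun x : P1 k => x)) F)%N.
  by rewrite -has_count; apply/hasP; exists None.
lia.
Qed.

Lemma sum3 (R : numDomainType) (f : 'I_3 -> R) (A : {set 'I_3}) :
  \sum_(i in A) f i = (if idx1 \in A then f idx1 else 0)
   + (if idx2 \in A then f idx2 else 0) + (if idx3 \in A then f idx3 else 0).
Proof.
rewrite big_mkcond /= !big_ord_recl big_ord0 addr0 addrA.
have -> : (ord0 : 'I_3) = idx1 by apply: val_inj.
have -> : (lift idx1 ord0 : 'I_3) = idx2 by apply: val_inj.
by have -> : (lift idx1 (lift ord0 ord0) : 'I_3) = idx3 by apply: val_inj.
Qed.
Theorem proposition9p1 (R : realType) (S : seq (P1 (Cplx R)))
  (a1 a2 a3 : P1 (Cplx R) -> R) (d1 d2 d3 : int) :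
  uniq S ->
  (forall p, p \in S ->
     Num.max (Num.max (a1 p) (a2 p)) (a3 p)
       - Num.min (Num.min (a1 p) (a2 p)) (a3 p) < 1) ->
  \sum_(p <- S) (a1 p + a2 p + a3 p) = 0 ->
  let l1 := count (fun p => a1 p < a2 p) S in
  let l2 := count (fun p => a2 p < a3 p) S in
  (exists th1 th2 : {poly Cplx R},
     [/\ strongly_parabolic_Hodge111 S (tri d1 d2 d3) (tri a1 a2 a3) th1 th2,
         th1 != 0, th2 != 0,
         pardeg S (tri d1 d2 d3) (tri a1 a2 a3) setT = 0 &
         semistable S (tri d1 d2 d3) (tri a1 a2 a3) th1 th2])
  <->
  ([/\ \sum_(p <- S) (a2 p + a3 p) <= d1%:~R,
       d1 <= d2 - 2 + l1%:Z,
       d2 - 2 + l1%:Z <= d3 - 4 + l1%:Z + l2%:Z &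
       (d3 - 4 + l1%:Z + l2%:Z)%:~R
         <= - \sum_(p <- S) a3 p - 4 + l1%:R + l2%:R]
   /\ d1 + d2 + d3 = 0).
Proof.
move=> uS _ Hsum l1 l2.
have hpd : forall A, pardeg S (tri d1 d2 d3) (tri a1 a2 a3) A =
   (if idx1 \in A then d1%:~R + \sum_(p <- S) a1 p else 0)
 + (if idx2 \in A then d2%:~R + \sum_(p <- S) a2 p else 0)
 + (if idx3 \in A then d3%:~R + \sum_(p <- S) a3 p else 0).
  by move=> A; rewrite /pardeg sum3.
have hT : pardeg S (tri d1 d2 d3) (tri a1 a2 a3) setT = (d1 + d2 + d3)%:~R.
  rewrite hpd !in_setT !intrD; move: Hsum; rewrite !big_split /=; lra.
have c1 : (count (fun p => a2 p <= a1 p) S)%:Z = (size S)%:Z - l1%:Z.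
  rewrite -(count_predC (fun p => a1 p < a2 p) S) /l1.
  have -> : count (fun p => a2 p <= a1 p) S = count (predC (fun p => a1 p < a2 p)) S.
    by apply: eq_count => p /=; rewrite leNgt.
  lia.
have c2 : (count (fun p => a3 p <= a2 p) S)%:Z = (size S)%:Z - l2%:Z.
  rewrite -(count_predC (fun p => a2 p < a3 p) S) /l2.
  have -> : count (fun p => a3 p <= a2 p) S = count (predC (fun p => a2 p < a3 p)) S.
    by apply: eq_count => p /=; rewrite leNgt.
  lia.
have sum23 : \sum_(p <- S) (a2 p + a3 p) = \sum_(p <- S) a2 p + \sum_(p <- S) a3 p.
  by rewrite big_split.
have e12 : (idx1 == idx2) = false by [].
have e13 : (idx1 == idx3) = false by [].
have e23 : (idx2 == idx3) = false by [].
have e21 : (idx2 == idx1) = false by [].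
have e31 : (idx3 == idx1) = false by [].
have e32 : (idx3 == idx2) = false by [].
split.
- case=> th1 [th2 [[s1 s2 z1 z2] n1 n2 pd ss]].
  have b1 : (size [seq p <- S | a2 p <= a1 p])%:Z <= higgs_deg S (tri d1 d2 d3) idx1 idx2.
    apply: sec_bound n1 s1 _; first exact: filter_uniq.
    by move=> p; rewrite mem_filter => /andP[h pS]; exact: z1.
  have b2 : (size [seq p <- S | a3 p <= a2 p])%:Z <= higgs_deg S (tri d1 d2 d3) idx2 idx3.
    apply: sec_bound n2 s2 _; first exact: filter_uniq.
    by move=> p; rewrite mem_filter => /andP[h pS]; exact: z2.
  rewrite size_filter c1 /higgs_deg /tri /= in b1.
  rewrite size_filter c2 /higgs_deg /tri /= in b2.
  have hdR : ((d1 + d2 + d3)%:~R : R) = 0 by rewrite -hT.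
  have hd : d1 + d2 + d3 = 0 by apply/eqP; rewrite -(intr_eq0 R); apply/eqP.
  have s3 := ss [set idx3].
  have s23 := ss [set idx2; idx3].
  rewrite hpd hT hdR cards1 !inE ?e12 ?e13 ?e23 ?e21 ?e31 ?e32 ?eqxx /= in s3.
  rewrite hpd hT hdR cards2 !inE ?e12 ?e13 ?e23 ?e21 ?e31 ?e32 ?eqxx /= in s23.
  have ne3 : [set idx3] != set0 by apply/set0Pn; exists idx3; rewrite inE.
  have ne23 : [set idx2; idx3] != set0 by apply/set0Pn; exists idx3; rewrite !inE eqxx orbT.
  move: (s3 ne3) (s23 ne23); rewrite /theta_invariant !inE ?e12 ?e13 ?e23 ?e21 ?e31 ?e32 ?eqxx /=.
  move=> /(_ isT) {}s3 /(_ (implybT _)) {}s23.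
  rewrite divr1 mul0r !add0r in s3.
  rewrite mul0r !add0r pmulr_lle0 ?invr_gt0 ?ltr0n // in s23.
  have hdR' : (d1%:~R + d2%:~R + d3%:~R : R) = 0 by rewrite -!intrD.
  split; last exact: hd.
  split.
  + rewrite sum23; lra.
  + move: b1; move: (size S) => n; clearbody l1 l2; clear; lia.
  + move: b2; move: (size S) => n; clearbody l1 l2; clear; lia.
  + rewrite !intrD.
    have -> : ((-4 : int)%:~R : R) = -4 by [].
    have -> : ((l1 : int)%:~R : R) = l1%:R by [].
    have -> : ((l2 : int)%:~R : R) = l2%:R by [].
    lra.
- case=> [[h1 h2 h3 h4] hd].
  have hdR : ((d1 + d2 + d3)%:~R : R) = 0 by rewrite hd.
  have hdR' : (d1%:~R + d2%:~R + d3%:~R : R) = 0 by rewrite -!intrD.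
  have e1 : (size [seq p <- S | a2 p <= a1 p])%:Z <= higgs_deg S (tri d1 d2 d3) idx1 idx2.
    rewrite size_filter c1 /higgs_deg /tri /=.
    move: h2; move: (size S) => n; clearbody l1 l2; clear; lia.
  have e2 : (size [seq p <- S | a3 p <= a2 p])%:Z <= higgs_deg S (tri d1 d2 d3) idx2 idx3.
    rewrite size_filter c2 /higgs_deg /tri /=.
    move: h3; move: (size S) => n; clearbody l1 l2; clear; lia.
  have [th1 [t1n t1s t1z]] := @sec_exists _ _ _ e1.
  have [th2 [t2n t2s t2z]] := @sec_exists _ _ _ e2.
  have h4' : (d3%:~R : R) <= - \sum_(p <- S) a3 p.
    move: h4; rewrite !intrD.
    have -> : ((-4 : int)%:~R : R) = -4 by [].
    have -> : ((l1 : int)%:~R : R) = l1%:R by [].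
    have -> : ((l2 : int)%:~R : R) = l2%:R by [].
    lra.
  exists th1, th2; split => //.
  + split => // p pS h.
      by apply: t1z; rewrite mem_filter pS andbT.
    by apply: t2z; rewrite mem_filter pS andbT.
  + by rewrite hT hdR.
  + move=> A _ inv.
    have -> : pardeg S (tri d1 d2 d3) (tri a1 a2 a3) setT / 3%:R = 0 by rewrite hT hdR mul0r.
    apply: mulr_le0_ge0; last by rewrite invr_ge0 ler0n.
    rewrite hpd; move: inv; rewrite /theta_invariant t1n t2n !andbT.
    move: h1 Hsum; rewrite sum23 !big_split /= => h1 Hs.
    by case: (idx1 \in A); case: (idx2 \in A); case: (idx3 \in A) => //= _; lra.
Qed.
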